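(* For all integers $m,n\geq 1$, \[p^{ed}_{od}(2m,2n)=p^{ed}_{od}(2m,2n-1).\]
   Context: $\mathcal{P}^{ed}_{od}$ is the set of integer partitions such that: - all parts are distinct; - every odd part is smaller than every even part; - at least one odd part appears. $p^{ed}_{od}(m,n)$ is the number of partitions of $n$ in $\mathcal{P}^{ed}_{od}$ with exactly $m$ parts. *)

(* Defs.v *)
From mathcomp Require Import all_boot.
Set Implicit Arguments. Unset Strict Implicit. Unset Printing Implicit Defensive.

(* A partition of n into DISTINCT parts is identified with its (finite) set of
   parts, a set of positive integers summing to n. All parts are <= n, so the
   set lives in {set 'I_n.+1}. *)

Definition in_Ped_od (n : nat) (A : {set 'I_n.+1}) : bool :=
  [&& (ord0 \notin A),
      [forall i in A, forall j in A, (odd i && ~~ odd j) ==> (i < j)] &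
      [exists i in A, odd i]].

Definition p_ed_od (m n : nat) : nat :=
  #|[set A : {set 'I_n.+1} | [&& in_Ped_od A, #|A| == m & \sum_(i in A) (i : nat) == n]]|.

(* Main.v *)
Require Import Defs.
From mathcomp Require Import all_boot.
Set Implicit Arguments. Unset Strict Implicit. Unset Printing Implicit Defensive.
From mathcomp Require Import zify.

Lemma PedE K (A : {set 'I_K.+1}) : in_Ped_od A <->
  [/\ forall i, i \in A -> 0 < i,
      forall i j, i \in A -> j \in A -> odd i -> ~~ odd j -> i < j
    & exists2 i, i \in A & odd i].
Proof.
rewrite /in_Ped_od; split.
  case/and3P=> h0 /forallP h1 /existsP [i /andP [hi ho]]; split.
  - move=> j hj; rewrite lt0n; apply/eqP => e.
    have ej : j = ord0 by apply: val_inj.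
    by rewrite -ej hj in h0.
  - move=> a b ha hb hoa heb.
    move: (h1 a); rewrite ha /= => /forallP /(_ b); rewrite hb hoa heb. by [].
  - by exists i.
case=> h0 h1 [i hi ho]; apply/and3P; split.
- apply/negP => h; move: (h0 _ h); by [].
- apply/forallP => a; apply/implyP => ha; apply/forallP => b; apply/implyP => hb.
  apply/implyP => /andP [p q]; exact: h1.
- by apply/existsP; exists i; rewrite hi.
Qed.

Section Tr.
Variables K L : nat.
Variable f : 'I_K.+1 -> 'I_L.+1.
Hypothesis hf : forall i, val (f i) = val i.
Lemma finj : injective f.
Proof. by move=> a b e; apply: val_inj; rewrite -hf e hf. Qed.

Lemma Ped_imset (A : {set 'I_K.+1}) : in_Ped_od (f @: A) = in_Ped_od A.
Proof.
apply/idP/idP => /PedE [h0 h1 [i hi ho]]; apply/PedE; split.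
- move=> j hj; rewrite -hf; apply: h0; exact: imset_f.
- move=> a b ha hb; rewrite -(hf a) -(hf b); apply: h1; exact: imset_f.
- by case/imsetP: hi => a ha e; exists a => //; rewrite -hf -e.
- by move=> j /imsetP [a ha ->]; rewrite hf; apply: h0.
- move=> a b /imsetP [a' ha ->] /imsetP [b' hb ->]; rewrite !hf; exact: h1.
- by exists (f i); [exact: imset_f | rewrite hf].
Qed.

Lemma card_imf (A : {set 'I_K.+1}) : #|f @: A| = #|A|.
Proof. by rewrite card_imset //; apply: finj. Qed.

Lemma sum_imf (A : {set 'I_K.+1}) : \sum_(j in f @: A) (j : nat) = \sum_(i in A) (i : nat).
Proof.
rewrite big_imset /=; last by move=> a b _ _; apply: finj.
by apply: eq_bigr => i _; rewrite hf.
Qed.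
End Tr.

Lemma mem_le_sum K (A : {set 'I_K.+1}) i : i \in A -> (i : nat) <= \sum_(j in A) (j : nat).
Proof. by move=> hi; rewrite (big_setD1 i hi) /= leq_addr. Qed.

Lemma transfer (K L M : nat) (hKL : K <= L) :
  p_ed_od M K = #|[set A : {set 'I_L.+1} | [&& in_Ped_od A, #|A| == M & \sum_(i in A) (i:nat) == K]]|.
Proof.
have h : K.+1 <= L.+1 by [].
set w := fun A : {set 'I_K.+1} => [set widen_ord h i | i in A].
have hf : forall i : 'I_K.+1, val (widen_ord h i) = val i by [].
rewrite /p_ed_od -(card_imset _ (imset_inj (finj hf))).
apply: eq_card => B; rewrite inE.
apply/imsetP/idP.
  case=> A; rewrite inE => hA ->.
  by rewrite Ped_imset // card_imf // sum_imf.
move=> hB.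
set A := [set i : 'I_K.+1 | widen_ord h i \in B].
have eB : B = [set widen_ord h i | i in A].
  apply/setP => j; apply/idP/imsetP.
  - move=> hj.
    have hjK : (j : nat) < K.+1.
      case/and3P: hB => _ _ /eqP <-; rewrite ltnS; exact: mem_le_sum.
    have ej : widen_ord h (Ordinal hjK) = j by apply: val_inj.
    by exists (Ordinal hjK) => //; rewrite inE ej.
  - by case=> i; rewrite inE => hi ->.
by exists A => //; rewrite inE; move: hB; rewrite eB (Ped_imset hf) (card_imf hf) (sum_imf hf).
Qed.

Lemma odd_sum K (A : {set 'I_K.+1}) :
  odd (\sum_(i in A) (i:nat)) = odd (\sum_(i in A) (odd i : nat)).
Proof.
rewrite (big_morph odd oddD (erefl : odd 0 = false)) [in RHS](big_morph odd oddD (erefl : odd 0 = false)).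
by apply: eq_bigr => i _; rewrite oddb.
Qed.

Lemma swapK (T : finType) (A : {set T}) a b : a \in A -> b \notin A ->
  a |: ((b |: (A :\ a)) :\ b) = A.
Proof.
move=> ha hb; apply/setP => j; rewrite !inE.
case: (eqVneq j a) => [->|hja] //=.
case: (eqVneq j b) => [->|hjb] //=; first by rewrite (negbTE hb).
Qed.

Section Main.
Variables N M : nat.
Hypothesis hN : ~~ odd N.
Hypothesis hN0 : 0 < N.
Hypothesis hM : ~~ odd M.
Local Notation T := 'I_N.+1.

Definition fmax (A : {set T}) := [pick x in A | odd x && [forall j in A, odd j ==> (j <= x)]].
Definition gmin (B : {set T}) := [pick y in B | ~~ odd y && [forall j in B, ~~ odd j ==> (y <= j)]].
Definition fwd (A : {set T}) : {set T} :=
  if fmax A is Some x then (inord x.-1 : T) |: (A :\ x) else A.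
Definition bwd (B : {set T}) : {set T} :=
  if gmin B is Some y then (inord y.+1 : T) |: (B :\ y) else B.
Definition inX (A : {set T}) s := [&& in_Ped_od A, #|A| == M & \sum_(i in A) (i:nat) == s].

Lemma fmax_spec (A : {set T}) : (exists2 i, i \in A & odd i) ->
  exists x, fmax A = Some x /\ [/\ x \in A, odd x & forall j, j \in A -> odd j -> j <= x].
Proof.
case=> i hi ho.
rewrite /fmax; case: pickP => [x /andP [hx /andP [hox /forallP hm]] | hn].
  exists x; split => //; split => // j hj hoj; move: (hm j); by rewrite hj hoj.
exfalso.
case: (@arg_maxnP _ i (fun k => (k \in A) && odd k) (fun k => nat_of_ord k)); first by rewrite hi.
move=> x /andP [hx hox] hm; move: (hn x); rewrite hx hox /=.
have -> : [forall j in A, odd j ==> (j <= x)].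
  apply/forallP => j; apply/implyP => hj; apply/implyP => hoj; apply: hm; by rewrite hj.
by [].
Qed.

Lemma gmin_spec (B : {set T}) : (exists2 i, i \in B & ~~ odd i) ->
  exists y, gmin B = Some y /\ [/\ y \in B, ~~ odd y & forall j, j \in B -> ~~ odd j -> y <= j].
Proof.
case=> i hi ho.
rewrite /gmin; case: pickP => [x /andP [hx /andP [hox /forallP hm]] | hn].
  exists x; split => //; split => // j hj hoj; move: (hm j); by rewrite hj hoj.
exfalso.
case: (@arg_minnP _ i (fun k => (k \in B) && ~~ odd k) (fun k => nat_of_ord k)); first by rewrite hi.
move=> x /andP [hx hox] hm; move: (hn x); rewrite hx hox /=.
have -> : [forall j in B, ~~ odd j ==> (x <= j)].
  apply/forallP => j; apply/implyP => hj; apply/implyP => hoj; apply: hm; by rewrite hj.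
by [].
Qed.

Lemma other_odd (A : {set T}) x : x \in A -> odd x -> ~~ odd (\sum_(i in A) (i:nat)) ->
  exists2 o, o \in A & (o != x) && odd o.
Proof.
move=> hx hox he.
case: (boolP [exists o in A, (o != x) && odd o]) => [/existsP [o /andP [ho1 ho2]]| hne].
  by exists o.
exfalso; move: he; rewrite odd_sum (big_setD1 x hx) /= hox big1 //.
move=> j; rewrite !inE => /andP [hjx hjA].
case hoj: (odd j) => //; exfalso; move/negP: hne; apply; apply/existsP; exists j.
by rewrite hjA hjx hoj.
Qed.

Lemma some_even (B : {set T}) : odd (\sum_(i in B) (i:nat)) -> ~~ odd #|B| ->
  exists2 y, y \in B & ~~ odd y.
Proof.
move=> ho hc.
case: (boolP [exists y in B, ~~ odd y]) => [/existsP [y /andP [h1 h2]]| hne].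
  by exists y.
exfalso; move: ho; rewrite odd_sum (eq_bigr (fun _ => 1)) ?sum1_card ?(negbTE hc) //.
move=> j hj; case hoj: (odd j) => //; exfalso; move/negP: hne; apply; apply/existsP; exists j.
by rewrite hj hoj.
Qed.

Lemma lt_par a b : odd a = odd b -> a < b -> a.+1 < b.
Proof.
move=> e hab; rewrite ltn_neqAle hab andbT; apply/eqP => e'.
by move: e; rewrite -e' oddS; case: (odd a).
Qed.

Lemma fwdP (A : {set T}) : inX A N -> inX (fwd A) N.-1 /\ bwd (fwd A) = A.
Proof.
case/and3P=> hP /eqP hc /eqP hs.
case/PedE: (hP) => h0 h1 hex.
have [x [ex [hx hox hmx]]] := fmax_spec hex.
have hlt : forall a, a \in A -> a != x -> odd a -> (a : nat).+1 < x.
  move=> a ha hax hoa; apply: lt_par; first by rewrite hoa hox.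
  rewrite ltn_neqAle hmx // andbT; apply: contra hax => /eqP e; apply/eqP/val_inj.
  exact: e.
have hse : ~~ odd (\sum_(i in A) (i:nat)) by rewrite hs.
have [o ho /andP [hox' hoo]] := other_odd hx hox hse.
have ho1 := hlt o ho hox' hoo.
have ho0 := h0 o ho.
set k := (x:nat).-1.
have xk : (x:nat) = k.+1 by rewrite /k; lia.
have kN : k < N.+1 by have := ltn_ord x; lia.
set x' : T := inord k.
have vx' : (x' : nat) = k by rewrite /x' inordK.
have ek : ~~ odd k by move: hox; rewrite xk oddS.
have hx'A : x' \notin A.
  apply/negP => h; have := h1 x x' hx h hox; rewrite vx' ek xk => /(_ isT); lia.
have ef : fwd A = x' |: (A :\ x) by rewrite /fwd ex.
rewrite ef.
have hxD : x' \notin A :\ x by rewrite !inE negb_and hx'A orbT.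
split.
  apply/and3P; split.
  - apply/PedE; split.
    + move=> j; rewrite !inE => /orP [/eqP ->|/andP [_ hj]]; last exact: h0.
      rewrite vx'; lia.
    + move=> a b; rewrite !inE => /orP [/eqP ->|/andP [hax ha]]; first by rewrite vx' (negbTE ek).
      move=> /orP [/eqP ->|/andP [hbx hb]] hoa heb.
      * rewrite vx'; have := hlt a ha hax hoa; lia.
      * exact: h1.
    + by exists o => //; rewrite !inE hox' ho orbT.
  - by rewrite cardsU1 hxD -hc (cardsD1 x A) hx.
  - rewrite big_setU1 //= vx'; move: hs; rewrite (big_setD1 x hx) /= xk => hs; apply/eqP; lia.
have hge : exists2 i, i \in x' |: (A :\ x) & ~~ odd i by exists x'; rewrite ?inE ?eqxx // vx'.
have [y [ey [hy hey hmy]]] := gmin_spec hge.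
have eyx : y = x'.
  move: hy; rewrite !inE => /orP [/eqP //|/andP [hyx hyA]].
  have := hmy x'; rewrite !inE eqxx vx' ek => /(_ isT isT) hyk.
  have := h1 x y hx hyA hox hey; lia.
rewrite /bwd ey eyx.
have -> : (inord (x' : nat).+1 : T) = x.
  by apply: val_inj; rewrite vx' -xk /= inordK.
exact: swapK.
Qed.

Lemma bwdP (B : {set T}) : inX B N.-1 -> inX (bwd B) N /\ fwd (bwd B) = B.
Proof.
case/and3P=> hP /eqP hc /eqP hs.
case/PedE: (hP) => h0 h1 _.
have hoN : odd N.-1 by have := hN; rewrite -[N](prednK hN0) oddS negbK.
have hex : exists2 i, i \in B & ~~ odd i.
  by apply: some_even; [rewrite hs | rewrite hc].
have [y [ey [hy hey hmy]]] := gmin_spec hex.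
have yN : (y:nat) < N by have := mem_le_sum hy; rewrite hs; lia.
set y' : T := inord (y:nat).+1.
have vy' : (y' : nat) = (y:nat).+1 by rewrite inordK.
have oy' : odd y' by rewrite vy' oddS hey.
have hy'B : y' \notin B.
  apply/negP => h; have := h1 y' y h hy oy' hey; rewrite vy'; lia.
have hyD : y' \notin B :\ y by rewrite !inE negb_and hy'B orbT.
have ef : bwd B = y' |: (B :\ y) by rewrite /bwd ey.
rewrite ef; split.
  apply/and3P; split.
  - apply/PedE; split.
    + move=> j; rewrite !inE => /orP [/eqP ->|/andP [_ hj]]; [by rewrite vy' | exact: h0].
    + move=> a b ha; rewrite !inE => /orP [/eqP ->|/andP [hby hb]]; first by move=> _; rewrite oy'.
      move=> hoa heb.
      have hyb : (y : nat) < b.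
        rewrite ltn_neqAle hmy // andbT; apply: contra hby => /eqP e; apply/eqP/val_inj.
        by rewrite /= e.
      have hyb' : (y : nat).+1 < b by apply: lt_par => //; rewrite (negbTE hey) (negbTE heb).
      move: ha; rewrite !inE => /orP [/eqP ->|/andP [_ ha]]; [by rewrite vy' | exact: h1].
    + by exists y'; rewrite ?inE ?eqxx.
  - by rewrite cardsU1 hyD -hc (cardsD1 y B) hy.
  - rewrite big_setU1 //= vy'; move: hs; rewrite (big_setD1 y hy) /= => hs; apply/eqP; lia.
have hex2 : exists2 i, i \in y' |: (B :\ y) & odd i by exists y'; rewrite ?inE ?eqxx.
have [z [ez [hz hoz hmz]]] := fmax_spec hex2.
have ezy : z = y'.
  move: hz; rewrite !inE => /orP [/eqP //|/andP [hzy hzB]].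
  have := hmz y'; rewrite !inE eqxx oy' => /(_ isT isT) hyz.
  have := h1 z y hzB hy hoz hey; rewrite vy' in hyz; lia.
rewrite /fwd ez ezy.
have -> : (inord (y' : nat).-1 : T) = y by apply: val_inj; rewrite vy' /= inordK.
exact: swapK.
Qed.

Lemma count_eq : #|[set A | inX A N]| = #|[set A | inX A N.-1]|.
Proof.
apply/eqP; rewrite eqn_leq; apply/andP; split.
  rewrite -(card_in_imset (f:=fwd)); last first.
    by apply: (can_in_inj (g:=bwd)) => A; rewrite inE => h; case: (fwdP h).
  apply: subset_leq_card; apply/subsetP => _ /imsetP [A hA ->].
  by move: hA; rewrite !inE => h; case: (fwdP h).
rewrite -(card_in_imset (f:=bwd)); last first.
  by apply: (can_in_inj (g:=fwd)) => A; rewrite inE => h; case: (bwdP h).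
apply: subset_leq_card; apply/subsetP => _ /imsetP [A hA ->].
by move: hA; rewrite !inE => h; case: (bwdP h).
Qed.

End Main.

Theorem mainTheorem7 (m n : nat) (hm : 1 <= m) (hn : 1 <= n) :
  p_ed_od (2 * m) (2 * n) = p_ed_od (2 * m) (2 * n - 1).
Proof.
have hN : ~~ odd (2 * n) by rewrite mul2n odd_double.
have hM : ~~ odd (2 * m) by rewrite mul2n odd_double.
have hN0 : 0 < 2 * n by lia.
rewrite (@transfer (2 * n - 1) (2 * n) (2 * m) (leq_subr 1 _)) subn1.
exact: (count_eq hN hN0 hM).
Qed.
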